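(* Let $\mathcal{F}=\mathcal{B}(K_3)$. Then for $n\ge 3$, $$2^{n-2}(1-o(1))\le f(n,\mathcal{F})\le 2^{n-2},$$ where $o(1)\to 0$ as $n\to\infty$.
   Context: For a graph $G$, a hypergraph $H$ is a Berge-$G$ hypergraph if there are an injective map $\phi:V(G)\to V(H)$ and pairwise distinct hyperedges $e_{xy}\in E(H)$, one for each $xy\in E(G)$, with $\phi(x),\phi(y)\in e_{xy}$. $\mathcal{B}(G)$ denotes the family of all Berge-$G$ hypergraphs. For a positive integer $n$ and a graph $G$, $f(n,\mathcal{B}(G))$ is the smallest number of colors in a coloring of all subsets of $[n]=\{1,\dots,n\}$ (i.e. of $2^{[n]}$) such that there is no monochromatic Berge-$G$ hypergraph, i.e. no color class, viewed as a (non-uniform) hypergraph on $[n]$, contains a Berge-$G$ subhypergraph. *)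

(* Defs.v *)
From mathcomp Require Import all_boot.
Set Implicit Arguments. Unset Strict Implicit. Unset Printing Implicit Defensive.

(* A (non-uniform) hypergraph on [n] = 'I_n is given by a predicate S on
   subsets of 'I_n (its set of hyperedges). *)
Definition berge_K3 (n : nat) (S : pred {set 'I_n}) : bool :=
  [exists x : 'I_n, exists y : 'I_n, exists z : 'I_n,
   exists e1 : {set 'I_n}, exists e2 : {set 'I_n}, exists e3 : {set 'I_n},
   [&& [&& x != y, y != z & x != z],
       [&& e1 != e2, e2 != e3 & e1 != e3],
       [&& S e1, S e2 & S e3],
       (x \in e1) && (y \in e1),
       (y \in e2) && (z \in e2) &
       (x \in e3) && (z \in e3)]].

Definition good_coloring (n k : nat) : bool :=
  [exists c : {ffun {set 'I_n} -> 'I_k},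
     [forall i : 'I_k, ~~ berge_K3 (fun e => c e == i)]].

Lemma good_coloring_exists (n : nat) : exists k, good_coloring n k.
Proof.
exists #|{set 'I_n}|; apply/existsP.
exists [ffun e => enum_rank e]; apply/forallP => i; apply/negP.
case/existsP=> x; case/existsP=> y; case/existsP=> z.
case/existsP=> e1; case/existsP=> e2; case/existsP=> e3.
case/and5P=> _ /and3P[ne12 _ _] /and3P[c1 c2 _] _ _.
move: c1 c2; rewrite !ffunE => /eqP h1 /eqP h2.
by move: ne12; rewrite (enum_rank_inj (etrans h1 (esym h2))) eqxx.
Qed.

Definition f_BK3 (n : nat) : nat := ex_minn (good_coloring_exists n).

(* Main.v *)
Require Import Defs.
From mathcomp Require Import all_boot.
From mathcomp Require Import zify.
Set Implicit Arguments. Unset Strict Implicit. Unset Printing Implicit Defensive.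

Section Upper.
Variable m : nat.
Definition o1 : 'I_m.+2 := lift ord0 ord0.
Definition sg (A : {set 'I_m.+2}) : {set 'I_m} :=
  [set i : 'I_m | (lift ord0 (lift ord0 i) \in A) == (ord0 \in A)].

Lemma key A B : sg A = sg B ->
  ((o1 \in A) == (ord0 \in A)) = ((o1 \in B) == (ord0 \in B)) ->
  A = B \/ A = ~: B.
Proof.
move=> /setP H H1.
have H2 : forall j, ((j \in A) == (ord0 \in A)) = ((j \in B) == (ord0 \in B)).
  move=> j; case: (unliftP ord0 j) => [j'|] ->; last by rewrite !eqxx.
  case: (unliftP ord0 j') => [i|] ->; last by exact H1.
  by have := H i; rewrite !inE.
case: (boolP ((ord0 \in A) == (ord0 \in B))) => E; [left|right];
  apply/setP => j; have := H2 j; rewrite ?inE; move: E;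
  by case: (j \in A); case: (j \in B); case: (ord0 \in A); case: (ord0 \in B).
Qed.

Lemma card_setI k : #|{set 'I_k}| = 2 ^ k.
Proof. by rewrite -cardsT -powersetT card_powerset cardsT card_ord. Qed.

Definition col : {ffun {set 'I_m.+2} -> 'I_(2 ^ m)} :=
  [ffun A => cast_ord (card_setI m) (enum_rank (sg A))].

Lemma col_eq A B : col A = col B -> sg A = sg B.
Proof. by rewrite !ffunE => /cast_ord_inj /enum_rank_inj. Qed.

Lemma good_upper : good_coloring m.+2 (2 ^ m).
Proof.
apply/existsP; exists col; apply/forallP => i; apply/negP.
case/existsP=> x; case/existsP=> y; case/existsP=> z.
case/existsP=> e1; case/existsP=> e2; case/existsP=> e3.
case/and5P=> _ /and3P[n12 n23 n13] /and3P[/eqP c1 /eqP c2 /eqP c3] /andP[x1 y1] /andP[/andP[y2 z2] /andP[x3 z3]].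
have s12 := col_eq (etrans c1 (esym c2)).
have s13 := col_eq (etrans c1 (esym c3)).
have s23 := col_eq (etrans c2 (esym c3)).
have disj : forall (a b : {set 'I_m.+2}) u, a != b -> u \in a -> u \in b -> sg a = sg b ->
   ((o1 \in a) == (ord0 \in a)) = ((o1 \in b) == (ord0 \in b)) -> False.
  move=> a b u nab ua ub sab h; case: (key sab h) => E.
    by rewrite E eqxx in nab.
  by rewrite E inE ub in ua.
move: (disj _ _ _ n12 y1 y2 s12) (disj _ _ _ n13 x1 x3 s13) (disj _ _ _ n23 z2 z3 s23).
by case: ((o1 \in e1) == (ord0 \in e1)); case: ((o1 \in e2) == (ord0 \in e2));
   case: ((o1 \in e3) == (ord0 \in e3)); auto.
Qed.
End Upper.

Lemma upper n : 3 <= n -> f_BK3 n <= 2 ^ (n - 2).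
Proof.
case: n => [|[|m]] // _; rewrite /f_BK3; case: ex_minnP => k _ Hmin.
rewrite subSS; apply: Hmin; rewrite subn1; exact: good_upper.
Qed.

Section Lower.
Variable n : nat.
Definition L : {set {set 'I_n}} := [set A : {set 'I_n} | n./2.+2 <= #|A|].

Lemma L_inter (A B : {set 'I_n}) : n./2.+2 <= #|A| -> n./2.+2 <= #|B| -> 2 < #|A :&: B|.
Proof.
move=> hA hB.
have := cardsUI A B; have := subset_leq_card (subsetT (A :|: B)); rewrite cardsT card_ord.
have := odd_double_half n. rewrite -addnn => hn. have : odd n <= 1 by case: (odd n). lia.
Qed.

Lemma tri (A B C : {set 'I_n}) : 2 < #|A :&: B| -> 2 < #|B :&: C| -> 2 < #|A :&: C| ->
  exists x y z, [&& [&& x != y, y != z & x != z], x \in A, y \in A, y \in B, z \in B,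
     x \in C & z \in C].
Proof.
move=> hAB hBC hAC.
have /card_gt0P [y] : 0 < #|A :&: B| by lia.
rewrite inE => /andP[yA yB].
have /card_gt0P [z] : 0 < #|(B :&: C) :\ y|.
  by have := cardsD1 y (B :&: C); case: (y \in _); lia.
rewrite !inE => /and3P[zy zB zC].
have /card_gt0P [x] : 0 < #|(A :&: C) :\ y :\ z|.
  have := cardsD1 y (A :&: C); have := cardsD1 z ((A :&: C) :\ y).
  by case: (y \in _); case: (z \in _); lia.
rewrite !inE => /and4P[xz xy xA xC].
exists x, y, z; rewrite xy xA yA yB zB xC zC xz /=.
by rewrite eq_sym zy.
Qed.

Lemma fiber k (c : {ffun {set 'I_n} -> 'I_k}) i :
  ~~ berge_K3 (fun e => c e == i) -> #|[set A in L | c A == i]| <= 2.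
Proof.
move=> nb; rewrite leqNgt; apply/negP => /card_gt2P [e1 [e2 [e3 [[h1 h2 h3] [n12 n23 n31]]]]].
move: h1 h2 h3; rewrite !inE => /andP[L1 c1] /andP[L2 c2] /andP[L3 c3].
have [x [y [z /and5P[d xA yA yB /and3P[zB xC zC]]]]] :=
  tri (L_inter L1 L2) (L_inter L2 L3) (L_inter L1 L3).
apply: (negP nb); apply/existsP; exists x; apply/existsP; exists y; apply/existsP; exists z.
apply/existsP; exists e1; apply/existsP; exists e2; apply/existsP; exists e3.
by rewrite d n12 n23 eq_sym n31 c1 c2 c3 xA yA yB zB xC zC.
Qed.

Lemma Lbound k : good_coloring n k -> #|L| <= 2 * k.
Proof.
case/existsP => c /forallP hc.
rewrite -sum1_card (partition_big c predT) //=.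
apply: (@leq_trans (\sum_(j < k) 2)); last by rewrite sum_nat_const card_ord mulnC.
apply: leq_sum => i _.
have := fiber (hc i); rewrite -sum1_card.
by rewrite (eq_bigl (fun A => (A \in L) && (c A == i))) // => A; rewrite !inE.
Qed.
End Lower.

Lemma cstep j : j.+1 * 'C(j.+1.*2, j.+1) = 2 * j.*2.+1 * 'C(j.*2, j).
Proof.
have h1 := mul_bin_diag j.*2.+2 j.
have h2 := mul_bin_diag j.*2.+1 j.
have h3 : 'C(j.*2.+1, j.+1) = 'C(j.*2.+1, j).
  rewrite -[in RHS]bin_sub; last by lia.
  by congr binomial; lia.
rewrite /= h3 in h2; rewrite /= in h1.
have e : j.+1.*2 = j.*2.+2 by rewrite doubleS.
rewrite e -h1.
apply/eqP; rewrite -(@eqn_pmul2l j.+1) //; apply/eqP.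
rewrite mulnA (mulnC j.+1) -mulnA -h2. lia.
Qed.

Lemma cb j : 'C(j.*2, j) ^ 2 * j.*2.+1 <= (2 ^ j.*2) ^ 2.
Proof.
elim: j => [|j IH]; first by [].
have hs := cstep j.
have e : 2 ^ j.+1.*2 = 4 * 2 ^ j.*2 by rewrite doubleS !expnS mulnA.
rewrite e.
set C := 'C(j.*2, j) in IH hs *; set C' := 'C(_, j.+1) in hs *; set P := 2 ^ j.*2 in IH e *.
have h : (j.+1 ^ 2) * (C' ^ 2 * (j.+1.*2.+1)) <= (j.+1 ^ 2) * (4 * P) ^ 2.
  have -> : j.+1 ^ 2 * (C' ^ 2 * j.+1.*2.+1) = (j.+1 * C') ^ 2 * j.+1.*2.+1 by rewrite expnMn; lia.
  rewrite hs.
  have : (2 * j.*2.+1 * C) ^ 2 * j.+1.*2.+1 = 4 * (j.*2.+1 * j.+1.*2.+1) * (C ^ 2 * j.*2.+1).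
    rewrite !expnMn; lia.
  move=> ->.
  have : j.*2.+1 * j.+1.*2.+1 <= 4 * j.+1 ^ 2 by lia.
  nia.
by rewrite leq_pmul2l ?expn_gt0 in h.
Qed.

Lemma mid K : exists N, forall n, N <= n -> 4 * K * 'C(n, n./2) <= 2 ^ n.
Proof.
exists (16 * K * K) => n hn.
have hn2 := odd_double_half n.
set j := n./2 in hn2 *; clearbody j.
case: (odd n) in hn2; rewrite /= in hn2; rewrite -hn2 in hn *.
- have h := cb j.+1.
  have e1 : 'C(j.*2.+1, j) * 2 = 'C(j.+1.*2, j.+1).
    rewrite doubleS binS.
    have -> : 'C(j.*2.+1, j.+1) = 'C(j.*2.+1, j).
      by rewrite -[in RHS]bin_sub; [congr binomial; lia | lia].
    lia.
  have e2 : 2 ^ j.*2.+1 * 2 = 2 ^ j.+1.*2 by rewrite doubleS !expnS; lia.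
  rewrite -(leq_pmul2r (_ : 0 < 2)) // e2 -mulnA e1.
  rewrite -leq_sqr; move: h.
  set C := 'C(_, _); set P := 2 ^ _ => h.
  have : 16 * K * K <= j.+1.*2.+1 by lia.
  nia.
- have h := cb j.
  rewrite -leq_sqr; move: h.
  set C := 'C(_, _); set P := 2 ^ _ => h.
  have : 16 * K * K <= j.*2.+1 by lia.
  nia.
Qed.

Lemma card_setI' k : #|{set 'I_k}| = 2 ^ k.
Proof. by rewrite -cardsT -powersetT card_powerset cardsT card_ord. Qed.

Section Small.
Variable n : nat.
Definition Low : {set {set 'I_n}} := [set A : {set 'I_n} | #|A| < n./2].
Definition D k : {set {set 'I_n}} := [set A : {set 'I_n} | #|A| == k].

Lemma cardU_le (X Y : {set {set 'I_n}}) : #|X :|: Y| <= #|X| + #|Y|.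
Proof. by have := cardsUI X Y; lia. Qed.

Lemma small_le : #|~: L n| <= #|Low| + 'C(n, n./2) + 'C(n, n./2.+1).
Proof.
have sub : ~: L n \subset (Low :|: D n./2) :|: D n./2.+1.
  apply/subsetP => A; rewrite !inE -!ltnNge => h.
  lia.
apply: leq_trans (subset_leq_card sub) _.
apply: leq_trans (cardU_le _ _) _.
rewrite {2}/D card_draws card_ord.
rewrite leq_add2r; apply: leq_trans (cardU_le _ _) _.
by rewrite /D card_draws card_ord.
Qed.

Lemma low_le : 2 * #|Low| <= 2 ^ n.
Proof.
have hi : #|(@setC _) @: Low| = #|Low| by rewrite card_imset //; exact: setC_inj.
have hd : #|Low :&: ((@setC _) @: Low)| = 0.
  apply/eqP; rewrite cards_eq0; apply/eqP/setP => A; rewrite !inE.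
  apply/negP => /andP[hA /imsetP [B hB eAB]].
  move: hA hB; rewrite !inE eAB => h1 h2.
  have := cardsC B; rewrite card_ord.
  have := odd_double_half n; rewrite -addnn.
  have : odd n <= 1 by case: (odd n).
  lia.
have := cardsUI Low ((@setC _) @: Low).
have := subset_leq_card (subsetT (Low :|: (@setC _) @: Low)).
rewrite cardsT card_setI' hi hd; lia.
Qed.

Lemma bin_next : 'C(n, n./2.+1) <= 'C(n, n./2).
Proof.
have h := mul_bin_left n n./2.
have : n - n./2 <= n./2.+1.
  have := odd_double_half n; rewrite -addnn.
  have : odd n <= 1 by case: (odd n). lia.
move=> hle.
rewrite -(@leq_pmul2l n./2.+1) // h.
by rewrite leq_mul2r hle orbT.
Qed.
End Small.

Lemma lower K : 0 < K -> exists N, forall n, N <= n ->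
  (K - 1) * 2 ^ (n - 2) <= K * f_BK3 n.
Proof.
move=> hK; have [N0 hN0] := mid K; exists (maxn N0 2) => n hn.
rewrite geq_max in hn; case/andP: hn => hn0 hn2.
rewrite /f_BK3; case: ex_minnP => k hk _.
have hL := Lbound hk.
have hs := small_le n.
have hlow := low_le n.
have hb := bin_next n.
have hm := hN0 n hn0.
have hc := cardsC (L n); rewrite card_setI' in hc.
have e : 2 ^ n = 4 * 2 ^ (n - 2).
  by rewrite -{1}(subnK hn2) expnD mulnC.
rewrite e in hc hlow hm.
move: hL hs hlow hb hm hc.
set P := 2 ^ (n - 2); set C := 'C(n, n./2); set C' := 'C(n, _).
set a := #|L n|; set b := #|~: L n|; set l := #|Low n|.
move=> hL hs hlow hb hm hc.
have h1 : P <= k + C by lia.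
have h2 : K * C <= P by lia.
have h3 : K * P <= K * k + K * C by rewrite -mulnDr leq_mul2l h1 orbT.
rewrite mulnBl mul1n. lia.
Qed.

Theorem theorem1 :
  (forall n : nat, 3 <= n -> f_BK3 n <= 2 ^ (n - 2)) /\
  (forall k : nat, 0 < k ->
     exists N : nat, forall n : nat, N <= n ->
       (k - 1) * 2 ^ (n - 2) <= k * f_BK3 n).
Proof. split; [exact: upper | exact: lower]. Qed.
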